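(* Let $G$ be a graph without isolated vertices. Then $\partial\Gamma(G)=2$ if and only if either $G$ is the complete bipartite graph $K_{n,m}$ for some $n\ge 2$ and $m\ge 1$, or $G$ is a disjoint union of copies of $K_2$ (i.e. every component is a single edge).
   Context: A proper $k$-coloring of $G$ is a surjective map $c:V(G)\to\{1,\ldots,k\}$ with $c(u)\ne c(v)$ for every edge $uv$. A vertex of color $i$ is a Grundy vertex if it has, for every $j<i$, a neighbor of color $j$. A partial Grundy $k$-coloring is a proper $k$-coloring in which every color class contains at least one Grundy vertex; $\partial\Gamma(G)$ is the largest $k$ such that $G$ has a partial Grundy $k$-coloring. *)

(* Defs.v *)
From mathcomp Require Import all_boot.
Set Implicit Arguments. Unset Strict Implicit. Unset Printing Implicit Defensive.

Definition simple_graph (T : finType) (e : rel T) : Prop :=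
  symmetric e /\ irreflexive e.

Definition no_isolated (T : finType) (e : rel T) : Prop :=
  forall v : T, exists u : T, e v u.

Definition proper_coloring (T : finType) (e : rel T) (k : nat) (c : T -> nat) : Prop :=
  [/\ forall v, 1 <= c v <= k,
      forall i, 1 <= i <= k -> exists v, c v = i
    & forall u v, e u v -> c u <> c v].

Definition grundy_vertex (T : finType) (e : rel T) (c : T -> nat) (v : T) : Prop :=
  forall j, 1 <= j < c v -> exists u, e v u /\ c u = j.

Definition partial_grundy_coloring (T : finType) (e : rel T) (k : nat) (c : T -> nat) : Prop :=
  proper_coloring e k c /\
  forall i, 1 <= i <= k -> exists v, c v = i /\ grundy_vertex e c v.

Definition has_partial_grundy (T : finType) (e : rel T) (k : nat) : Prop :=
  exists c : T -> nat, partial_grundy_coloring e k c.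

Definition partial_grundy_number_is (T : finType) (e : rel T) (k : nat) : Prop :=
  has_partial_grundy e k /\ forall k', has_partial_grundy e k' -> k' <= k.

Definition is_complete_bipartite_n2_m1 (T : finType) (e : rel T) : Prop :=
  exists A : {set T},
    [/\ 2 <= #|A|, 1 <= #|~: A| & forall u v, e u v = ((u \in A) != (v \in A))].

Definition is_union_of_K2 (T : finType) (e : rel T) : Prop :=
  forall v : T, exists u : T, e v u /\ [set w | connect e v w] = [set v; u].

(* Main.v *)
Require Import Defs.
From mathcomp Require Import all_boot zify.
Set Implicit Arguments. Unset Strict Implicit. Unset Printing Implicit Defensive.

Lemma grundy_upper (T : finType) (e : rel T) k c :
  partial_grundy_coloring e k c -> 3 <= k ->
  exists w u1 u2 z z1, [/\ c w = 3, e w u1 /\ c u1 = 1, e w u2 /\ c u2 = 2,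
     c z = 2 & e z z1 /\ c z1 = 1].
Proof.
move=> [[Hr Hs Hp] Hg] Hk.
have [w [Hw Gw]] := Hg 3 (ltac:(lia)).
have [z [Hz Gz]] := Hg 2 (ltac:(lia)).
have [u1 [H1 C1]] := Gw 1 (ltac:(lia)).
have [u2 [H2 C2]] := Gw 2 (ltac:(lia)).
have [z1 [H3 C3]] := Gz 1 (ltac:(lia)).
by exists w, u1, u2, z, z1.
Qed.

Lemma case1 (T : finType) (e : rel T) (c0 : T -> nat) v x1 x2 y :
  symmetric e -> no_isolated e -> (forall w, 1 <= c0 w <= 2) ->
  (forall a b, e a b -> c0 a <> c0 b) ->
  e v x1 -> e v x2 -> x1 != x2 -> c0 y = c0 v -> ~~ e x2 y ->
  has_partial_grundy e 3.
Proof.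
move=> esym Hni Hr Hp H1 H2 H12 Hy Hny.
have Hx1 : (c0 x1 == c0 v) = false by apply/eqP => E; apply: (Hp v x1 H1).
have Hx2 : (c0 x2 == c0 v) = false by apply/eqP => E; apply: (Hp v x2 H2).
pose c := fun w => if c0 w == c0 v then (if e x2 w then 3 else 2)
                   else (if w == x2 then 2 else 1).
have cx1 : c x1 = 1 by rewrite /c Hx1 (negbTE H12).
have cx2 : c x2 = 2 by rewrite /c Hx2 eqxx.
have cv : c v = 3 by rewrite /c eqxx esym H2.
have cy : c y = 2 by rewrite /c Hy eqxx (negbTE Hny).
exists c; split; [split|].
- by move=> w; rewrite /c; case: ifP => _; case: ifP => _.
- move=> i Hi; have : i = 1 \/ i = 2 \/ i = 3 by lia.
  by case=> [->|[->|->]]; [exists x1 | exists x2 | exists v].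
- move=> a b Hab; have := Hp a b Hab; have := Hr a; have := Hr b; have := Hr v.
  rewrite /c; case: ifP => Ha; case: ifP => Hxa; case: ifP => Hb; case: ifP => Hxb;
    try (move=> *; lia).
  + move/eqP: Hxb => Hxb; rewrite Hxb esym in Hab; by rewrite Hab in Hxa.
  + move/eqP: Hxa => Hxa; rewrite Hxa in Hab; by rewrite Hab in Hxb.
- move=> i Hi; have : i = 1 \/ i = 2 \/ i = 3 by lia.
  case=> [->|[->|->]].
  + by exists x1; split => // j; lia.
  + exists y; split => // j Hj; have -> : j = 1 by lia.
    have [u Hu] := Hni y; exists u; split => //.
    rewrite /c; have -> : (c0 u == c0 v) = false.
      by apply/eqP => E; apply: (Hp y u Hu); rewrite E Hy.
    case: eqP => // E; subst u; by rewrite esym Hu in Hny.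
  + exists v; split => // j Hj; have : j = 1 \/ j = 2 by lia.
    by case=> ->; [exists x1 | exists x2].
Qed.

Lemma uniq_nb_K2 (T : finType) (e : rel T) :
  irreflexive e -> is_union_of_K2 e -> forall v a b, e v a -> e v b -> a = b.
Proof.
move=> eirr H v a b Ha Hb.
have [u [Hu Hc]] := H v.
have mem : forall x, e v x -> x = u.
  move=> x Hx; have : x \in [set w | connect e v w] by rewrite inE connect1.
  rewrite Hc !inE => /orP [/eqP E|/eqP //]; by rewrite E eirr in Hx.
by rewrite (mem a Ha) (mem b Hb).
Qed.

Lemma K2_of_uniq (T : finType) (e : rel T) :
  symmetric e -> no_isolated e -> (forall v a b, e v a -> e v b -> a = b) ->
  is_union_of_K2 e.
Proof.
move=> esym Hni Hu v; have [u Hvu] := Hni v; exists u; split => //.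
apply/setP => w; rewrite !inE; apply/idP/idP.
- case/connectP => p Hp ->.
  have : forall p x, (x == v) || (x == u) -> path e x p ->
           (last x p == v) || (last x p == u).
    elim=> [|y q IH] x Hx //= /andP [Hxy Hq]; apply: IH Hq.
    case/orP: Hx => /eqP Ex; subst x.
    + by rewrite (Hu _ _ _ Hxy Hvu) eqxx orbT.
    + have Huv : e u v by rewrite esym.
      by rewrite (Hu _ _ _ Hxy Huv) eqxx.
  by apply; rewrite ?eqxx.
- case/orP => /eqP ->; [exact: connect0 | exact: connect1].
Qed.

Lemma K2_grundy2 (T : finType) (e : rel T) :
  symmetric e -> irreflexive e -> 0 < #|T| -> no_isolated e ->
  (forall v a b, e v a -> e v b -> a = b) -> has_partial_grundy e 2.
Proof.
move=> esym eirr HT Hni Hu.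
pose c := fun w => if [exists u, e w u && (enum_rank u < enum_rank w)] then 2 else 1.
have cE : forall a b, e a b -> c a = if enum_rank b < enum_rank a then 2 else 1.
  move=> a b Hab; rewrite /c; case: ifP => [/existsP [u /andP [Hu' Hlt]]|/existsPn Hn].
  - by rewrite -(Hu _ _ _ Hu' Hab) Hlt.
  - by have := Hn b; rewrite Hab /= => /negbTE ->.
have prop : forall a b, e a b -> c a <> c b.
  move=> a b Hab; rewrite (cE a b Hab) (cE b a (etrans (esym b a) Hab)).
  case: (ltngtP (enum_rank a) (enum_rank b)) => // /ord_inj /enum_rank_inj E.
  by rewrite E eirr in Hab.
have [p [q [Hqp Cp Cq]]] : exists p q, [/\ e q p, c p = 1 & c q = 2].
  case/card_gt0P: HT => v _; have [u Hvu] := Hni v.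
  have Huv : e u v by rewrite esym.
  rewrite /= in Hvu.
  have := cE v u Hvu; have := cE u v Huv.
  case: (ltngtP (enum_rank u) (enum_rank v)) => H C1 C2.
  - by exists u, v.
  - by exists v, u.
  - by move: H => /ord_inj /enum_rank_inj E; rewrite E eirr in Hvu.
have crange : forall w, 1 <= c w <= 2 by move=> w; rewrite /c; case: ifP.
exists c; split; [split|].
- exact: crange.
- move=> i Hi; have : i = 1 \/ i = 2 by lia.
  by case=> ->; [exists p | exists q].
- exact: prop.
- move=> i Hi; have : i = 1 \/ i = 2 by lia.
  case=> ->; [exists p | exists q]; split => // j Hj; try lia.
  have -> : j = 1 by lia.
  by exists p.
Qed.

Theorem mainTheorem4 (T : finType) (e : rel T) :
  simple_graph e -> 0 < #|T| -> no_isolated e ->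
  (partial_grundy_number_is e 2 <->
   (is_complete_bipartite_n2_m1 e \/ is_union_of_K2 e)).
Proof.
move=> [esym eirr] HT Hni; split.
- move=> [[c0 [[Hr Hs Hp] Hg]] Hmax].
  case: (boolP [exists v, exists x1, exists x2, exists y,
     [&& e v x1, e v x2, x1 != x2, c0 y == c0 v & ~~ e x2 y]]).
  + case/existsP => v /existsP [x1 /existsP [x2 /existsP [y /and5P [H1 H2 H3 /eqP H4 H5]]]].
    by have := Hmax 3 (case1 esym Hni Hr Hp H1 H2 H3 H4 H5).
  move=> Hneg.
  have Hno : forall v x1 x2 y, e v x1 -> e v x2 -> x1 != x2 -> c0 y = c0 v -> e x2 y.
    move=> v x1 x2 y H1 H2 H3 H4; apply/negPn/negP => H5; move/negP: Hneg; apply.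
    apply/existsP; exists v; apply/existsP; exists x1; apply/existsP; exists x2.
    by apply/existsP; exists y; rewrite H1 H2 H3 H4 eqxx H5.
  case: (boolP [exists v, exists x1, exists x2, [&& e v x1, e v x2 & x1 != x2]]).
  + case/existsP => v /existsP [x1 /existsP [x2 /and3P [H1 H2 H3]]]; left.
    have Hx : forall x, c0 x != c0 v -> forall y, c0 y = c0 v -> e x y.
      move=> x Hxv y Hy; have [z Hz] := Hni x.
      have Hzv : c0 z = c0 v.
        have := Hp x z Hz; have := Hr x; have := Hr z; have := Hr v.
        move/eqP: Hxv; lia.
      have Hz1 : e z x1 by rewrite esym; apply: (Hno v x2 x1 z H2 H1 _ Hzv); rewrite eq_sym.
      have Hz2 : e z x2 by rewrite esym; apply: (Hno v x1 x2 z H1 H2 H3 Hzv).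
      have Hyz : c0 y = c0 z by rewrite Hy Hzv.
      case: (eqVneq x x1) => [Ex|Nx].
      * by rewrite Ex; apply: (Hno z x2 x1 y Hz2 Hz1 _ Hyz); rewrite eq_sym.
      * by apply: (Hno z x1 x y Hz1 (etrans (esym z x) Hz) _ Hyz); rewrite eq_sym.
    exists [set w | c0 w != c0 v]; split.
    * apply: leq_trans (subset_leq_card (_ : [set x1; x2] \subset _)); first by rewrite cards2 H3.
      apply/subsetP => w; rewrite !inE => /orP [] /eqP ->; apply/eqP => E.
      - by apply: (Hp v x1 H1).
      - by apply: (Hp v x2 H2).
    * by rewrite card_gt0; apply/set0Pn; exists v; rewrite !inE eqxx.
    * move=> a b; rewrite !inE.
      case: (eqVneq (c0 a) (c0 v)) => Ha; case: (eqVneq (c0 b) (c0 v)) => Hb /=.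
      - by apply/negP => Hab; apply: (Hp a b Hab); rewrite Ha Hb.
      - by rewrite esym; apply: Hx.
      - by apply: Hx.
      - apply/negP => Hab; have := Hp a b Hab; have := Hr a; have := Hr b; have := Hr v.
        move/eqP: Ha; move/eqP: Hb; lia.
  + move=> Hneg2; right; apply: K2_of_uniq => // v a b Ha Hb.
    apply/eqP/negPn/negP => Hab; move/negP: Hneg2; apply.
    apply/existsP; exists v; apply/existsP; exists a; apply/existsP; exists b.
    by rewrite Ha Hb Hab.
- case=> [[A [HA HcA Hcb]] | HK].
  + have [a Ha] : exists a, a \in A.
      by apply/set0Pn; rewrite -card_gt0; apply: leq_trans HA.
    have [b Hb] : exists b, b \notin A.
      by move: HcA; rewrite card_gt0 => /set0Pn [b]; rewrite inE => Hb; exists b.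
    split.
    * exists (fun w => if w \in A then 1 else 2); split; [split|].
      - by move=> w; case: ifP.
      - move=> i Hi; have : i = 1 \/ i = 2 by lia.
        by case=> ->; [exists a; rewrite Ha | exists b; rewrite (negbTE Hb)].
      - by move=> u w; rewrite Hcb; case: (u \in A); case: (w \in A).
      - move=> i Hi; have : i = 1 \/ i = 2 by lia.
        case=> ->.
        + by exists a; split; [rewrite Ha | move=> j; rewrite Ha; lia].
        + exists b; split; first by rewrite (negbTE Hb).
          move=> j; rewrite (negbTE Hb) => Hj; have -> : j = 1 by lia.
          by exists a; rewrite Hcb Ha (negbTE Hb).
    * move=> k' [c Hc]; case: (leqP k' 2) => // Hk; exfalso.
      have [w [u1 [u2 [z [z1 [Cw [E1 C1] [E2 C2] Cz [E3 C3]]]]]]] := grundy_upper Hc Hk.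
      case: Hc => [[_ _ Hp] _].
      have P1 := Hp z1 u1; have P2 := Hp z u2.
      rewrite C1 C2 C3 Cz in P1 P2.
      move: E1 E2 E3 P1 P2; rewrite !Hcb.
      case: (w \in A); case: (u1 \in A); case: (u2 \in A); case: (z \in A);
        case: (z1 \in A) => //= _ _ _ P1 P2; (try by apply: P1); by apply: P2.
  + split.
    * exact: K2_grundy2 esym eirr HT Hni (uniq_nb_K2 eirr HK).
    * move=> k' [c Hc]; case: (leqP k' 2) => // Hk; exfalso.
      have [w [u1 [u2 [z [z1 [Cw [E1 C1] [E2 C2] Cz [E3 C3]]]]]]] := grundy_upper Hc Hk.
      by have E := uniq_nb_K2 eirr HK E1 E2; rewrite E C2 in C1.
Qed.
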